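(* Let $m\ge 2$, let $C=uRM(m)$ (defined in the context) with base qubits $b_0,\dots,b_m$ and parity labels $L(q)$. For each $i\in\{0,\dots,m\}$, the logical operator $i$ of $C$, i.e. the codeword $x^{(i)}\in C$ with $x^{(i)}_{b_i}=1$ and $x^{(i)}_{b_j}=0$ for $j\ne i$ (whose support is the set of qubits $q$ with $i\in L(q)$), has weight exactly $2^{m-1}$.
   Context: Let $a=\lceil m/2\rceil$, $b=\lfloor m/2\rfloor$. Place $2^m$ bits (qubits) on a grid with $2^b$ rows and $2^a$ columns, positions $(i,j)$, row $1$ on top, column $1$ leftmost. Bulk checks: for $1\le i<2^b$, $1\le j<2^a$, the set $\{(i,j),(i+1,j),(i,j+1),(i+1,j+1)\}$. Boundary checks: for a line of $L=2^n$ positions $1,\dots,L$, each $s\in\{1,\dots,n-1\}$, $w=2^s$, and integer $t$ with $-L/(2w)+1\le t\le L/(2w)-1$, $S(w,t)=\{L/2-w/2+wt,\ L/2-w/2+wt+1,\ L/2+w/2+wt,\ L/2+w/2+wt+1\}$; these with $n=a$ on the top row ($j\mapsto(1,j)$) and with $n=b$ on the leftmost column ($i\mapsto(i,1)$). $C=uRM(m)$ is the set of $x\in\mathbb{F}_2^{2^m}$ with even sum over every check; it has dimension $m+1$. Base qubits are $m+1$ positions $b_0,\dots,b_m$ such that $x\mapsto(x_{b_0},\dots,x_{b_m})$ is a bijection $C\to\mathbb{F}_2^{m+1}$. The parity label of a qubit $q$ is the unique $L(q)\subseteq\{0,\dots,m\}$ with $x_q=\sum_{i\in L(q)}x_{b_i}$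 for all $x\in C$. *)

(* Defs.v *)
From mathcomp Require Import all_boot all_order all_algebra.
Set Implicit Arguments. Unset Strict Implicit. Unset Printing Implicit Defensive.
Import Order.TTheory GRing.Theory Num.Theory.

Definition acol (m : nat) : nat := uphalf m.
Definition brow (m : nat) : nat := m./2.

(* A qubit is a grid position (row, column), 0-indexed internally:
   the ordinal pair (r, c) denotes the paper's position (r+1, c+1). *)
Definition qubit (m : nat) : finType := ('I_(2 ^ brow m) * 'I_(2 ^ acol m))%type.

Definition row1 {m} (q : qubit m) : nat := (val q.1).+1.
Definition col1 {m} (q : qubit m) : nat := (val q.2).+1.

Definition bulk_check (m i j : nat) : {set qubit m} :=
  [set q : qubit m | (row1 q \in [:: i; i.+1]) && (col1 q \in [:: j; j.+1])].

Definition bnd_pos (n s : nat) (t : int) : seq int :=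
  let L2 := Posz ((2 ^ n) %/ 2) in
  let w2 := Posz ((2 ^ s) %/ 2) in
  let w := Posz (2 ^ s) in
  [:: (L2 - w2 + w * t)%R; (L2 - w2 + w * t + 1)%R;
      (L2 + w2 + w * t)%R; (L2 + w2 + w * t + 1)%R].

Definition bnd_ok (n s : nat) (t : int) : Prop :=
  (1 <= s <= n - 1)%N /\
  (- Posz (2 ^ n %/ (2 * 2 ^ s)) + 1 <= t)%R /\
  (t <= Posz (2 ^ n %/ (2 * 2 ^ s)) - 1)%R.

Definition top_check (m s : nat) (t : int) : {set qubit m} :=
  [set q : qubit m | (row1 q == 1%N) && (Posz (col1 q) \in bnd_pos (acol m) s t)].

Definition left_check (m s : nat) (t : int) : {set qubit m} :=
  [set q : qubit m | (col1 q == 1%N) && (Posz (row1 q) \in bnd_pos (brow m) s t)].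

Definition is_check {m : nat} (S : {set qubit m}) : Prop :=
  (exists i j, [/\ (1 <= i < 2 ^ brow m)%N, (1 <= j < 2 ^ acol m)%N
                 & S = bulk_check m i j])
  \/ (exists s t, bnd_ok (acol m) s t /\ S = top_check m s t)
  \/ (exists s t, bnd_ok (brow m) s t /\ S = left_check m s t).

(* Binary words on the qubits (elements of F_2^{2^m}, with bool = F_2). *)
Definition word (m : nat) := {ffun qubit m -> bool}.

Definition even_on {m} (x : word m) (S : {set qubit m}) : bool :=
  ~~ odd #|[set q in S | x q]|.

Definition in_uRM {m : nat} (x : word m) : Prop :=
  forall S : {set qubit m}, is_check S -> even_on x S.

(* b_0..b_m are base qubits: x |-> (x_{b_0},...,x_{b_m}) is a bijection C -> F_2^{m+1}. *)
Definition base_qubits {m : nat} (b : 'I_m.+1 -> qubit m) : Prop :=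
  (forall x y : word m, in_uRM x -> in_uRM y ->
     (forall k, x (b k) = y (b k)) -> x = y)
  /\ (forall v : 'I_m.+1 -> bool, exists x : word m,
        in_uRM x /\ forall k, x (b k) = v k).

Definition weight {m} (x : word m) : nat := #|[set q | x q]|.

(* Main.v *)
From mathcomp Require Import all_boot all_order all_algebra.
From mathcomp Require Import zify ring.
Import GRing.Theory Num.Theory.

Lemma sum_reidx a b (F : nat -> nat) :
  \sum_(0 <= p < a * b) F p = \sum_(0 <= y < a) \sum_(0 <= i < b) F (y * b + i).
Proof.
elim: a => [|a IH]; first by rewrite mul0n !big_geq.
rewrite mulSnr big_nat_recr //= (big_cat_nat _ (n := a * b)) //= ?leq_addr // IH.
congr (_ + _).
rewrite -{1}(add0n (a * b)) big_addn. rewrite addnC addnK.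
by apply: eq_bigr => i _; rewrite addnC.
Qed.

Lemma odd_form q : 0 < q -> exists j c, q = (2 * c + 1) * 2 ^ j.
Proof.
elim/ltn_ind: q => q IH q0.
case Oq: (odd q).
  exists 0; exists q./2; rewrite expn0 muln1; have := odd_double_half q; rewrite Oq -muln2; lia.
have := odd_double_half q; rewrite Oq add0n => Eq.
have h0 : 0 < q./2 by rewrite -double_gt0 Eq.
have [|j [c Ec]] := IH q./2 _ h0.
  move: q0; rewrite -Eq -addnn; lia.
exists j.+1; exists c. rewrite -Eq Ec expnS -muln2; lia.
Qed.

Section Line.
Variable n : nat.
Variable U : nat -> bool.
Hypothesis H : forall j c, j.+2 <= n -> (2 * c + 3) * 2 ^ j < 2 ^ n ->
  U ((2 * c + 1) * 2 ^ j).-1 (+) U ((2 * c + 1) * 2 ^ j)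
  (+) U ((2 * c + 3) * 2 ^ j).-1 (+) U ((2 * c + 3) * 2 ^ j) = false.

Let D q := U q.-1 (+) U q.

Lemma step1 j c : (2 * c + 1) * 2 ^ j < 2 ^ n -> D ((2 * c + 1) * 2 ^ j) = D (2 ^ j).
Proof.
elim: c => [|c IH] Hc; first by rewrite mul1n.
have E3 : 2 * c.+1 + 1 = 2 * c + 3 by lia.
have Hc' : (2 * c + 3) * 2 ^ j < 2 ^ n by rewrite -E3.
have Hj : j.+2 <= n.
  have : 2 ^ j.+1 < 2 ^ n.
    apply: leq_ltn_trans Hc'; rewrite expnS leq_pmul2r ?expn_gt0 //; lia.
  by rewrite ltn_exp2l.
have := H j c Hj Hc'; rewrite -IH; last first.
  apply: leq_ltn_trans Hc'; rewrite leq_pmul2r ?expn_gt0 //; lia.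
rewrite /D E3 /= => E.
by apply/eqP; move: E; do 4 case: (U _).
Qed.

Lemma step1' q j c : q = (2 * c + 1) * 2 ^ j -> q < 2 ^ n -> D q = D (2 ^ j) /\ j < n.
Proof.
move=> -> Hq; split; first exact: step1.
rewrite -(ltn_exp2l _ _ (isT : 1 < 2)); apply: leq_ltn_trans Hq.
by rewrite leq_pmull //; lia.
Qed.

Lemma line :
  (forall p, p < 2 ^ n -> U p = U 0) \/ \sum_(0 <= p < 2 ^ n) U p = 2 ^ n.-1.
Proof.
case: (boolP [exists j : 'I_n, D (2 ^ j)]) => [/existsP [j0 Dj0] | nD].
  right.
  have exP : exists k, (k < n) && D (2 ^ k) by exists j0; rewrite ltn_ord Dj0.
  case: (ex_minnP exP) => k /andP [kn Dk] kmin.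
  have block z i : i < 2 ^ k -> z * 2 ^ k + i < 2 ^ n -> U (z * 2 ^ k + i) = U (z * 2 ^ k).
    elim: i => [|i IH]; first by rewrite addn0.
    move=> Hi Hz.
    rewrite -IH; [|lia|lia].
    have [j [c Ec]] := odd_form _ (ltn0Sn (z * 2 ^ k + i)).
    rewrite addnS in Hz.
    have [E1 jn] := step1' _ _ _ Ec Hz.
    have jk : j < k.
      rewrite ltnNge; apply/negP => kj.
      have : 2 ^ k %| (z * 2 ^ k + i).+1.
        by rewrite Ec dvdn_mull // dvdn_exp2l.
      rewrite -addnS dvdn_addr ?dvdn_mull // => /dvdn_leq; lia.
    have Dj : D (2 ^ j) = false.
      apply/negP => Dj; have := kmin j; rewrite jn Dj => /(_ isT); lia.
    move: E1; rewrite Dj /D /= => E.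
    by apply/eqP; move: E; rewrite -addnS; do 2 case: (U _).
  have flip y i : i < 2 ^ k -> (2 * y + 1) * 2 ^ k + i < 2 ^ n ->
      U ((2 * y + 1) * 2 ^ k + i) = ~~ U ((2 * y) * 2 ^ k + i).
    move=> Hi Hy.
    have Hy0 : (2 * y + 1) * 2 ^ k < 2 ^ n by lia.
    rewrite block // block; last 2 first.
    - lia.
    - lia.
    have [E1 _] := step1' _ _ _ (erefl _) Hy0.
    move: E1; rewrite Dk /D.
    have -> : ((2 * y + 1) * 2 ^ k).-1 = 2 * y * 2 ^ k + (2 ^ k).-1.
      have := expn_gt0 2 k; lia.
    rewrite block; [|have := expn_gt0 2 k; lia|lia].
    by do 2 case: (U _).
  have En : 2 ^ n = 2 ^ (n - k.+1) * (2 * 2 ^ k).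
    by rewrite -expnS -expnD subnK.
  rewrite En sum_reidx.
  rewrite (eq_big_nat _ _ (F2 := fun _ => 2 ^ k)); last first.
    move=> y /andP [_ Hy].
    rewrite sum_reidx big_nat_recr //= big_nat_recr //= big_geq // add0n.
    rewrite -big_split /=.
    rewrite (eq_big_nat _ _ (F2 := fun _ => 1)); first by rewrite sum_nat_const_nat muln1 subn0.
    move=> i /andP [_ Hi].
    have Hb : (2 * y + 1) * 2 ^ k + i < 2 ^ n.
      rewrite En; apply: (@leq_trans ((2 * y + 2) * 2 ^ k)); first by lia.
      rewrite mulnA leq_pmul2r ?expn_gt0 //.
      lia.
    have -> : y * (2 * 2 ^ k) + (1 * 2 ^ k + i) = (2 * y + 1) * 2 ^ k + i by lia.
    have -> : y * (2 * 2 ^ k) + (0 * 2 ^ k + i) = 2 * y * 2 ^ k + i by lia.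
    by rewrite flip //; case: (U _).
  rewrite sum_nat_const_nat subn0 -expnD.
  congr (2 ^ _); lia.
left.
have Dz q : 0 < q -> q < 2 ^ n -> D q = false.
  move=> q0 qn; have [j [c Ec]] := odd_form _ q0.
  have [-> jn] := step1' _ _ _ Ec qn.
  by apply/negP => Dj; move/existsP: nD; apply; exists (Ordinal jn).
elim=> [//|p IH] Hp.
rewrite -IH; last lia.
have := Dz p.+1 (ltn0Sn _) Hp; rewrite /D /=.
by case: (U _); case: (U _).
Qed.
End Line.
Require Import Defs.
Set Implicit Arguments. Unset Strict Implicit.
Lemma pow2_gt0 n : 0 < 2 ^ n. Proof. by rewrite expn_gt0. Qed.
Definition R0 m : 'I_(2 ^ brow m) := Ordinal (pow2_gt0 (brow m)).
Definition C0 m : 'I_(2 ^ acol m) := Ordinal (pow2_gt0 (acol m)).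
Definition rw m p : 'I_(2 ^ brow m) := insubd (R0 m) p.
Definition cl m p : 'I_(2 ^ acol m) := insubd (C0 m) p.
Definition X m (x : word m) r c := x (rw m r, cl m c).

Lemma val_rw m p : p < 2 ^ brow m -> val (rw m p) = p.
Proof. by move=> h; rewrite val_insubd h. Qed.
Lemma val_cl m p : p < 2 ^ acol m -> val (cl m p) = p.
Proof. by move=> h; rewrite val_insubd h. Qed.
Lemma nat_rw m p : p < 2 ^ brow m -> nat_of_ord (rw m p) = p.
Proof. exact: val_rw. Qed.
Lemma nat_cl m p : p < 2 ^ acol m -> nat_of_ord (cl m p) = p.
Proof. exact: val_cl. Qed.
Lemma x_X m (x : word m) (q : qubit m) : x q = X x (val q.1) (val q.2).
Proof. by case: q => a b; rewrite /X /rw /cl !valKd. Qed.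

Lemma eq_pair m (q : qubit m) r c : r < 2 ^ brow m -> c < 2 ^ acol m ->
  (q == (rw m r, cl m c)) = (val q.1 == r) && (val q.2 == c).
Proof.
case: q => q1 q2 hr hc.
by rewrite xpair_eqE -(val_eqE q1) -(val_eqE q2) /= val_rw // val_cl.
Qed.

Lemma card_count (T : finType) (S : {set T}) (l : seq T) (f : T -> bool) :
  uniq l -> (forall q, (q \in S) = (q \in l)) -> #|[set q in S | f q]| = count f l.
Proof.
move=> ul hS; rewrite -size_filter.
move/card_uniqP: (filter_uniq f ul) => <-.
by apply: eq_card => q; rewrite !inE mem_filter hS andbC.
Qed.

Lemma odd4 (a b c d : bool) : odd (count id [:: a; b; c; d]) = a (+) b (+) c (+) d.
Proof. by case: a; case: b; case: c; case: d. Qed.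

Section Main.
Variable m : nat.
Variable x : word m.
Hypothesis Hx : in_uRM x.

Lemma bulk r c : r.+1 < 2 ^ brow m -> c.+1 < 2 ^ acol m ->
  X x r c (+) X x r.+1 c (+) X x r c.+1 (+) X x r.+1 c.+1 = false.
Proof.
move=> hr hc.
have hr' : r < 2 ^ brow m by apply: ltnW.
have hc' : c < 2 ^ acol m by apply: ltnW.
have := Hx (S := bulk_check m r.+1 c.+1).
rewrite /even_on (card_count (l := [:: (rw m r, cl m c); (rw m r.+1, cl m c);
     (rw m r, cl m c.+1); (rw m r.+1, cl m c.+1)])).
- rewrite -(odd4 (X x r c)) /X.
  have -> : count x [:: (rw m r, cl m c); (rw m r.+1, cl m c);
     (rw m r, cl m c.+1); (rw m r.+1, cl m c.+1)] =
     count id [:: x (rw m r, cl m c); x (rw m r.+1, cl m c);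
     x (rw m r, cl m c.+1); x (rw m r.+1, cl m c.+1)] by [].
  move=> h; apply/negbTE; apply: h.
  left; exists r.+1, c.+1; split => //.
- rewrite /= !inE !eq_pair //= !val_rw // !val_cl //.
  lia.
- move=> q; rewrite /bulk_check !inE /row1 /col1 !eqSS !eq_pair //.
  by case: (val q.1 == r); case: (val q.1 == r.+1); case: (val q.2 == c);
     case: (val q.2 == c.+1).
Qed.

Lemma grid r c : r < 2 ^ brow m -> c < 2 ^ acol m ->
  X x r c = X x r 0 (+) X x 0 c (+) X x 0 0.
Proof.
elim: r c => [|r IHr] c hr hc.
  by case: (X x 0 0); case: (X x 0 c).
elim: c hc => [|c IHc] hc.
  by case: (X x r.+1 0); case: (X x 0 0).
have B := bulk hr hc.
have E1 := IHr c (ltnW hr) (ltnW hc).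
have E2 := IHr c.+1 (ltnW hr) hc.
have E3 := IHc (ltnW hc).
rewrite E1 E2 E3 in B.
move: B.
by case: (X x r.+1 c.+1); case: (X x r 0); case: (X x r.+1 0); case: (X x 0 c);
   case: (X x 0 c.+1); case: (X x 0 0).
Qed.
End Main.

Lemma div_facts n j : j.+2 <= n ->
  [/\ 2 ^ n %/ 2 = 2 * 2 ^ j * 2 ^ (n - j.+2), 2 ^ j.+1 %/ 2 = 2 ^ j,
      2 ^ n %/ (2 * 2 ^ j.+1) = 2 ^ (n - j.+2)
    & 2 ^ n = 2 * (2 * 2 ^ j) * 2 ^ (n - j.+2)].
Proof.
move=> hj.
have En : 2 ^ n = 2 * (2 * 2 ^ j) * 2 ^ (n - j.+2) by rewrite -!expnS -expnD subnKC.
split => //.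
- by rewrite En -!mulnA mulKn.
- by rewrite expnS mulKn.
- by rewrite {1}En expnS mulKn // !muln_gt0 expn_gt0.
Qed.

Local Open Scope ring_scope.
Lemma bnd_pos_eq n j c : (j.+2 <= n)%N ->
  bnd_pos n j.+1 (Posz c - Posz (2 ^ (n - j.+2)) + 1) =
  [:: Posz ((2*c+1)*2^j); Posz ((2*c+1)*2^j + 1); Posz ((2*c+3)*2^j);
      Posz ((2*c+3)*2^j + 1)].
Proof.
move=> hj; have [e1 e2 e3 En] := div_facts hj.
rewrite /bnd_pos e1 e2 expnS.
congr [:: _; _; _; _]; rewrite !PoszD !PoszM; ring.
Qed.

Local Close Scope ring_scope.
Lemma bnd_ok_eq n j c : (j.+2 <= n)%N -> ((2*c+3)*2^j < 2^n)%N ->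
  bnd_ok n j.+1 (Posz c - Posz (2 ^ (n - j.+2)) + 1)%R.
Proof.
move=> hj hc; have [e1 e2 e3 En] := div_facts hj.
have h4 : (2 * c + 3 < 4 * 2 ^ (n - j.+2))%N.
  rewrite -(ltn_pmul2r (pow2_gt0 j)); move: hc; rewrite En.
  have -> : 2 * (2 * 2 ^ j) * 2 ^ (n - j.+2) = 4 * 2 ^ (n - j.+2) * 2 ^ j by ring.
  done.
rewrite /bnd_ok e3; split; first lia.
split; lia.
Qed.

Lemma mem_bnd n j c k : j.+2 <= n ->
  (Posz k.+1 \in bnd_pos n j.+1 (Posz c - Posz (2 ^ (n - j.+2)) + 1)%R) =
  (k \in [:: ((2*c+1)*2^j).-1; (2*c+1)*2^j; ((2*c+3)*2^j).-1; (2*c+3)*2^j]).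
Proof.
move=> hj; rewrite bnd_pos_eq // !inE !eqz_nat.
have hA : 0 < (2*c+1)*2^j by rewrite muln_gt0 expn_gt0 addn1.
have hAB : (2*c+3)*2^j = (2*c+1)*2^j + 2 * 2^j by rewrite -mulnDl -addnA.
rewrite hAB; move: hA; set A := (2*c+1)*2^j; have := pow2_gt0 j; set W := 2^j.
move=> hW hA; lia.
Qed.

Section Main2.
Variable m : nat.
Variable x : word m.
Hypothesis Hx : in_uRM x.

Lemma top_line j c : j.+2 <= acol m -> (2 * c + 3) * 2 ^ j < 2 ^ acol m ->
  X x 0 ((2 * c + 1) * 2 ^ j).-1 (+) X x 0 ((2 * c + 1) * 2 ^ j)
  (+) X x 0 ((2 * c + 3) * 2 ^ j).-1 (+) X x 0 ((2 * c + 3) * 2 ^ j) = false.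
Proof.
move=> hj hc.
have hA : 0 < (2*c+1)*2^j by rewrite muln_gt0 expn_gt0 addn1.
have hAB : (2*c+3)*2^j = (2*c+1)*2^j + 2 * 2^j by rewrite -mulnDl -addnA.
have h0 := pow2_gt0 (brow m).
set l := map (fun p => (rw m 0, cl m p))
   [:: ((2*c+1)*2^j).-1; (2*c+1)*2^j; ((2*c+3)*2^j).-1; (2*c+3)*2^j].
have ul : uniq l.
  move: hc; rewrite /l hAB => hc.
  rewrite /= !inE !eq_pair //= ?nat_rw // ?nat_cl //; try lia.
have ml : forall q, (q \in top_check m j.+1 (Posz c - Posz (2 ^ (acol m - j.+2)) + 1)%R) = (q \in l).
  move=> q; rewrite /top_check inE /row1 /col1 mem_bnd //.
  move: hc; rewrite /l hAB => hc.
  rewrite /= !inE !eq_pair //= ?eqSS; try lia.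
have := Hx (S := top_check m j.+1 (Posz c - Posz (2 ^ (acol m - j.+2)) + 1)%R).
rewrite /even_on (card_count _ ul ml) /l -odd4 /X /=.
move=> h; apply/negbTE; apply: h.
right; left; exists j.+1, (Posz c - Posz (2 ^ (acol m - j.+2)) + 1)%R.
by split => //; apply: bnd_ok_eq.
Qed.
Lemma left_line j c : j.+2 <= brow m -> (2 * c + 3) * 2 ^ j < 2 ^ brow m ->
  X x ((2 * c + 1) * 2 ^ j).-1 0 (+) X x ((2 * c + 1) * 2 ^ j) 0
  (+) X x ((2 * c + 3) * 2 ^ j).-1 0 (+) X x ((2 * c + 3) * 2 ^ j) 0 = false.
Proof.
move=> hj hc.
have hA : 0 < (2*c+1)*2^j by rewrite muln_gt0 expn_gt0 addn1.
have hAB : (2*c+3)*2^j = (2*c+1)*2^j + 2 * 2^j by rewrite -mulnDl -addnA.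
have h0 := pow2_gt0 (acol m).
set l := map (fun p => (rw m p, cl m 0))
   [:: ((2*c+1)*2^j).-1; (2*c+1)*2^j; ((2*c+3)*2^j).-1; (2*c+3)*2^j].
have ul : uniq l.
  move: hc; rewrite /l hAB => hc.
  rewrite /= !inE !eq_pair //= ?nat_rw // ?nat_cl //; try lia.
have ml : forall q, (q \in left_check m j.+1 (Posz c - Posz (2 ^ (brow m - j.+2)) + 1)%R) = (q \in l).
  move=> q; rewrite /left_check inE /row1 /col1 mem_bnd //.
  move: hc; rewrite /l hAB => hc.
  rewrite /= !inE !eq_pair //= ?eqSS; try lia.
have := Hx (S := left_check m j.+1 (Posz c - Posz (2 ^ (brow m - j.+2)) + 1)%R).
rewrite /even_on (card_count _ ul ml) /l -odd4 /X /=.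
move=> h; apply/negbTE; apply: h.
right; right; exists j.+1, (Posz c - Posz (2 ^ (brow m - j.+2)) + 1)%R.
by split => //; apply: bnd_ok_eq.
Qed.
End Main2.

Lemma sum_flip n (U : nat -> bool) k : 0 < n ->
  \sum_(0 <= p < 2 ^ n) U p = 2 ^ n.-1 ->
  \sum_(0 <= p < 2 ^ n) (k (+) U p : nat) = 2 ^ n.-1.
Proof.
move=> n0 HU; case: k => //=.
have E : \sum_(0 <= p < 2 ^ n) (~~ U p : nat) + \sum_(0 <= p < 2 ^ n) (U p : nat) = 2 ^ n.
  rewrite -big_split /= (eq_bigr (fun _ => 1)); first by rewrite sum_nat_const_nat subn0 muln1.
  by move=> p _; case: (U p).
have E2 : 2 ^ n = 2 * 2 ^ n.-1 by rewrite -expnS prednK.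
lia.
Qed.

Unset Implicit Arguments.
Theorem lemma3 (m : nat) (b : 'I_m.+1 -> qubit m) (i : 'I_m.+1) (x : word m) :
  (2 <= m)%N ->
  base_qubits b ->
  in_uRM x ->
  (forall k : 'I_m.+1, x (b k) = (k == i)) ->
  weight x = 2 ^ m.-1.
Proof.
move=> m2 _ Hx Hb.
have hab : acol m + brow m = m.
  rewrite /acol /brow uphalf_half; have := odd_double_half m; lia.
have b1 : 0 < brow m by rewrite /brow; have := odd_double_half m; lia.
have a1 : 0 < acol m by rewrite /acol uphalf_half; lia.
have Ew : weight x = \sum_(0 <= r < 2 ^ brow m) \sum_(0 <= c < 2 ^ acol m) (X x r c : nat).
  rewrite /weight -sum1_card big_mkcond /= big_mkord.
  rewrite (eq_bigr (fun r : 'I_(2 ^ brow m) => \sum_(c < 2 ^ acol m) (X x r c : nat)));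
    last by move=> r _; rewrite big_mkord.
  rewrite pair_bigA /=; apply: eq_bigr => q _; rewrite inE (x_X x q).
  by case: (X _ _ _).
have HU := line (acol m) (X x 0) (fun j c hj hc => top_line Hx hj hc).
have HV := line (brow m) (fun r => X x r 0) (fun j c hj hc => left_line Hx hj hc).
have G := grid Hx.
rewrite Ew.
case: HU => [Uc | Ub].
  case: HV => [Vc | Vb].
    exfalso.
    have allc q : x q = X x 0 0.
      rewrite x_X G ?ltn_ord // Vc ?ltn_ord // Uc ?ltn_ord //.
      by case: (X x 0 0).
    have [i' ii] : exists i' : 'I_m.+1, i' != i.
      case: (i =P ord0) => [-> | ne].
        by exists ord_max; apply/eqP => /(congr1 val) /=; lia.
      by exists ord0; rewrite eq_sym; apply/eqP.
    have := Hb i; have := Hb i'; rewrite (negbTE ii) eqxx !allc.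
    by move=> ->.
  rewrite (eq_big_nat _ _ (F2 := fun r => 2 ^ acol m * X x r 0)); last first.
    move=> r /andP [_ hr].
    rewrite (eq_big_nat _ _ (F2 := fun _ => (X x r 0 : nat))); last first.
      move=> c /andP [_ hc]; rewrite G // Uc //.
      by case: (X x r 0); case: (X x 0 0).
    by rewrite sum_nat_const_nat subn0 mulnC.
  rewrite -big_distrr /= Vb -expnD; congr (2 ^ _); lia.
rewrite (eq_big_nat _ _ (F2 := fun r => 2 ^ (acol m).-1)); last first.
  move=> r /andP [_ hr].
  rewrite -(sum_flip (X x r 0 (+) X x 0 0) a1 Ub).
  apply: eq_big_nat => c /andP [_ hc]; rewrite G //.
  by case: (X x r 0); case: (X x 0 0); case: (X x 0 c).
rewrite sum_nat_const_nat subn0 -expnD; congr (2 ^ _); lia.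
Qed.
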